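(* For an $r$-graph $H$, $C_r(n,H)$ is bounded (for all $n$) by a constant $C(H)$ depending only on $H$ if and only if $H$ is not $2$-locally large.
   Context: An $r$-graph is an $r$-uniform hypergraph; $K_n^{(r)}$ is the complete $r$-graph on $n$ vertices. A copy of an $r$-graph $H$ in $K_n^{(r)}$ is a subhypergraph isomorphic to $H$. An $(n,r,H)$-local coloring with $k$ colors is a family of edge-colorings $f_v:E(K_n^{(r)})\to[k]$, one per vertex $v$, such that for every copy $T$ of $H$ there is $u\in V(T)$ with $f_u$ injective on $E(T)$. $C_r(n,H)$ is the minimum such $k$. Let $H$ be an $r$-graph on $m$ vertices and $\sigma:V(H)\to[m]$ a bijection. For $x\in V(H)$ and $1\le i\le r$, $T_x^i$ is the set of edges $e\ni x$ such that $\sigma(x)$ is the $i$-th smallest of the values $\sigma(v)$, $v\in e$. For $r+1\le i\le 2r+1$, $T_x^i$ is the set of edges $e\not\ni x$ such that $\sigma(x)$ is the $(i-r)$-th smallest among the values $\sigma(v)$, $v\in e\cup\{x\}$. (The sets $T_x^1,\dots,T_x^{2r+1}$ partition $E(H)$.) $H$ is $2$-locally large if there exists a bijection $\sigma:V(H)\to[m]$ such that for every vertex $x\in V(H)$ some $T_x^i$, $i\in[2r+1]$, contains at least two edges. *)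

(* Defs.v *)
From mathcomp Require Import all_boot all_fingroup.
Set Implicit Arguments. Unset Strict Implicit. Unset Printing Implicit Defensive.

Definition r_uniform (m r : nat) (E : {set {set 'I_m}}) : Prop :=
  forall e, e \in E -> #|e| = r.

(* Edges of K_n^(r) are the r-subsets of 'I_n.  A local coloring with k colors
   is a family f_v (v : 'I_n) of colorings of edges with colors 'I_k
   (= [k]); f_v is given on all subsets, only its values on r-sets matter.
   A copy T of H in K_n^(r) is the image of H under an injection
   phi : 'I_m -> 'I_n; V(T) = phi(V(H)), E(T) = { phi(e) : e in E(H) }. *)
Definition local_coloring (n r m : nat) (E : {set {set 'I_m}}) (k : nat)
  (f : {ffun 'I_n -> {ffun {set 'I_n} -> 'I_k}}) : bool :=
  [forall phi : {ffun 'I_m -> 'I_n}, injectiveb phi ==>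
     [exists x : 'I_m, [forall e in E, forall e' in E,
        (f (phi x) (phi @: e) == f (phi x) (phi @: e')) ==> (phi @: e == phi @: e')]]].

Definition has_local_coloring (n r m : nat) (E : {set {set 'I_m}}) (k : nat) : bool :=
  [exists f : {ffun 'I_n -> {ffun {set 'I_n} -> 'I_k}}, local_coloring r E f].

(* The disjunct (k == 2^n) only guarantees existence of the minimum; a local
   coloring with #|{set 'I_n}| colors (distinct color per set) exists whenever
   H has a vertex, so for m > 0 this is exactly the minimum of the paper. *)
Lemma Cr_ex (n r m : nat) (E : {set {set 'I_m}}) :
  exists k, has_local_coloring n r E k || (k == 2 ^ n).
Proof. by exists (2 ^ n); rewrite eqxx orbT. Qed.

Definition Cr (r n m : nat) (E : {set {set 'I_m}}) : nat :=
  ex_minn (Cr_ex n r E).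

(* T_x^i for the ordering sigma : V(H) -> [m] (a bijection, i.e. a permutation
   of 'I_m; values are compared as naturals).  "sigma x is the j-th smallest
   among the values sigma v, v in S" (S containing x) means exactly that j-1
   elements v of S have sigma v < sigma x; for S = e cup {x} with x not in e,
   these are the elements of e. *)
Definition Tset (r m : nat) (E : {set {set 'I_m}}) (sigma : {perm 'I_m})
  (x : 'I_m) (i : nat) : {set {set 'I_m}} :=
  if (1 <= i <= r) then
    [set e in E | (x \in e) && (#|[set v in e | sigma v < sigma x]| == i.-1)]
  else
    [set e in E | (x \notin e) && (#|[set v in e | sigma v < sigma x]| == i - r - 1)].

Definition two_locally_large (r m : nat) (E : {set {set 'I_m}}) : Prop :=
  exists sigma : {perm 'I_m}, forall x : 'I_m,
    exists i : nat, 1 <= i <= 2 * r + 1 /\ 2 <= #|Tset r E sigma x i|.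

(* Main.v *)
Require Import Defs.
From mathcomp Require Import all_boot all_fingroup.
From mathcomp Require Import zify.
From Stdlib Require Import Classical.
Set Implicit Arguments. Unset Strict Implicit. Unset Printing Implicit Defensive.

Definition hom (T : finType) p (g : {set T} -> nat) (Y : {set T}) :=
  forall A B : {set T}, A \subset Y -> B \subset Y -> #|A| = p -> #|B| = p -> g A = g B.

Inductive good (T : finType) (p : nat) (g : {set T} -> nat) (col : T -> nat) : {set T} -> Prop :=
| good0 : good p g col set0
| goodS (z : T) (Z : {set T}) : z \notin Z -> good p g col Z ->
    (forall A : {set T}, A \subset Z -> #|A| = p -> g (z |: A) = col z) -> good p g col (z |: Z).

Lemma good_ext (T : finType) p g (col col' : T -> nat) Z :
  good p g col Z -> {in Z, col =1 col'} -> good p g col' Z.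
Proof.
elim=> [|z Z' zn _ IH H] E; first exact: good0.
apply: goodS => //.
  by apply: IH => y yZ; apply: E; rewrite in_setU1 yZ orbT.
by move=> A sA cA; rewrite H // E // setU11.
Qed.

Lemma good_hom (T : finType) p g (col : T -> nat) Z :
  good p g col Z -> forall B : {set T}, B \subset Z -> #|B| = p.+1 -> exists2 z, z \in B & g B = col z.
Proof.
elim=> [|z Z' zn _ IH H] B sB cB.
  by move: sB; rewrite subset0 => /eqP Bz; rewrite Bz cards0 in cB.
case zB: (z \in B).
  exists z => //; rewrite -(setD1K zB) H //.
    apply/subsetP => w; rewrite in_setD1 => /andP [wz wB].
    by move/subsetP: sB => /(_ w wB); rewrite in_setU1 (negbTE wz).
  by move: cB; rewrite (cardsD1 z B) zB add1n => -[].
apply: IH => //; apply/subsetP => w wB.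
move/subsetP: sB => /(_ w wB); rewrite in_setU1 => /orP [/eqP wz|//].
by rewrite -wz wB in zB.
Qed.

Lemma php (T : finType) (Z : {set T}) (col : T -> nat) c t :
  (forall z, z \in Z -> col z < c) -> c * t < #|Z| ->
  exists v, t < #|[set z in Z | col z == v]|.
Proof.
elim: c Z => [|c IH] Z hb hc.
  by move: hc; rewrite mul0n card_gt0 => /set0Pn [z /hb].
case: (ltnP t #|[set z in Z | col z == c]|) => h1; first by exists c.
have hZ2 : forall z, z \in [set z in Z | col z < c] -> col z < c.
  by move=> z; rewrite inE => /andP [].
have sZ : Z \subset [set z in Z | col z == c] :|: [set z in Z | col z < c].
  apply/subsetP => z zZ; rewrite !inE zZ /=.
  by have := hb z zZ; rewrite ltnS leq_eqVlt.
have := subset_leq_card sZ; have := cardsU [set z in Z | col z == c] [set z in Z | col z < c].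
move=> e1 e2.
case: (IH _ hZ2).
  rewrite mulSn in hc; lia.
move=> v hv; exists v; apply: (leq_trans hv); apply: subset_leq_card.
by apply/subsetP => z; rewrite !inE => /andP [/andP [-> _] ->].
Qed.

Definition ramsey_stmt p := forall c t, exists N, forall (T : finType) (X : {set T})
  (g : {set T} -> nat), N <= #|X| -> (forall A, g A < c) ->
  exists2 Y : {set T}, Y \subset X & t <= #|Y| /\ hom p g Y.

Lemma ramsey0 : ramsey_stmt 0.
Proof.
move=> c t; exists t => T X g hX hg; exists X => //; split => // A B _ _.
by move=> /cards0_eq -> /cards0_eq ->.
Qed.

Lemma build p : ramsey_stmt p -> forall c L, exists N, forall (T : finType) (X : {set T})
  (g : {set T} -> nat), N <= #|X| -> (forall A, g A < c) ->
  exists Z : {set T}, exists col : T -> nat, [/\ Z \subset X, L <= #|Z|, good p g col Z &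
     forall z, z \in Z -> col z < c].
Proof.
move=> R c; elim=> [|L [NL HL]].
  exists 0 => T X g _ _; exists set0, (fun _ => 0); split => //.
  - exact: sub0set.
  - exact: good0.
  - by move=> z; rewrite inE.
case: (R c NL) => N' HR; exists N'.+1 => T X g hX hg.
have [z0 z0X] : exists z0, z0 \in X by apply/set0Pn; rewrite -card_gt0; lia.
have hX' : N' <= #|X :\ z0| by move: hX; rewrite (cardsD1 z0 X) z0X; lia.
case: (HR T _ (fun A => g (z0 |: A)) hX' (fun A => hg _)) => Y sYX [hY homY].
case: (HL T Y g hY hg) => Z' [col' [sZY hZ' gZ' bZ']].
set v := g (z0 |: odflt set0 [pick A : {set T} | (A \subset Y) && (#|A| == p)]).
have z0Z' : z0 \notin Z'.
  apply/negP => /(subsetP sZY) /(subsetP sYX); by rewrite setD11.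
exists (z0 |: Z'), (fun y => if y == z0 then v else col' y); split.
- rewrite subUset sub1set z0X /=; apply: (subset_trans sZY).
  apply: (subset_trans sYX); exact: subsetDl.
- by rewrite cardsU1 z0Z'.
- apply: goodS => //.
    apply: (good_ext gZ') => y yZ /=.
    by case: eqP => // yz; rewrite -yz yZ in z0Z'.
  move=> A sA cA; rewrite eqxx /v.
  case: pickP => [A0 /andP [s0 /eqP c0]|/(_ A)] /=.
    apply: homY => //; exact: (subset_trans sA sZY).
  by rewrite (subset_trans sA sZY) cA eqxx.
- move=> z; rewrite in_setU1; case: eqP => _ /= h; [exact: hg | exact: bZ'].
Qed.

Lemma ramsey_succ p : ramsey_stmt p -> ramsey_stmt p.+1.
Proof.
move=> R c t; case: (build R c (c * t).+1) => N HB; exists N => T X g hX hg.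
case: (HB T X g hX hg) => Z [col [sZX hZ gZ bZ]].
case: (php bZ hZ) => v hv.
exists [set z in Z | col z == v].
  apply: subset_trans sZX; apply/subsetP => z; rewrite inE; by case/andP.
split; first exact: ltnW.
have key : forall A : {set T}, A \subset [set z in Z | col z == v] -> #|A| = p.+1 -> g A = v.
  move=> A sA cA.
  have sAZ : A \subset Z.
    apply: subset_trans sA _; apply/subsetP => z; rewrite inE; by case/andP.
  case: (good_hom gZ sAZ cA) => z zA ->.
  by move/subsetP: sA => /(_ z zA); rewrite inE => /andP [_ /eqP].
by move=> A B sA sB cA cB; rewrite (key A sA cA) (key B sB cB).
Qed.

Lemma ramsey p : ramsey_stmt p.
Proof. elim: p => [|p IH]; [exact: ramsey0 | exact: ramsey_succ]. Qed.

Definition rkf (A : finType) (S : {set A}) (f : A -> nat) (x : A) :=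
  #|[set y in S | f y < f x]|.

Lemma rkf_lt (A : finType) (S : {set A}) f u v : u \in S ->
  (rkf S f u < rkf S f v) = (f u < f v).
Proof.
move=> uS; case: (ltnP (f u) (f v)) => h.
  apply: proper_card; apply/properP; split.
    apply/subsetP => y; rewrite !inE => /andP [-> /= hy]; exact: ltn_trans hy h.
  by exists u; rewrite !inE ?uS ?h ?ltnn.
apply/negbTE; rewrite -leqNgt; apply: subset_leq_card; apply/subsetP => y.
by rewrite !inE => /andP [-> /= hy]; exact: leq_trans hy h.
Qed.

Lemma rkf_bound (A : finType) (S : {set A}) f x : x \in S -> rkf S f x < #|S|.
Proof.
move=> xS; apply: proper_card; apply/properP; split.
  by apply/subsetP => y; rewrite inE => /andP [].
by exists x; rewrite // inE ltnn andbF.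
Qed.

Definition rk n (S : {set 'I_n}) (z : 'I_n) := rkf S (@nat_of_ord n) z.

Lemma rk_lt n (S : {set 'I_n}) u v : u \in S -> (rk S u < rk S v) = (u < v).
Proof. exact: rkf_lt. Qed.

Lemma rk_inj n (S : {set 'I_n}) u v : u \in S -> v \in S -> rk S u = rk S v -> u = v.
Proof.
move=> uS vS e; apply: val_inj => /=; case: (ltngtP u v) => // h.
  by move: h; rewrite -(rk_lt _ uS) e ltnn.
by move: h; rewrite -(rk_lt _ vS) e ltnn.
Qed.

Lemma pick_rk n (S : {set 'I_n}) z j : z \in S -> rk S z = j ->
  [pick w in S | rk S w == j] = Some z.
Proof.
move=> zS zj; case: pickP => [w /andP [wS /eqP wj]|/(_ z)].
  by congr Some; exact: (rk_inj wS zS (etrans wj (esym zj))).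
by rewrite zS zj eqxx.
Qed.

Lemma rk_surj n (S : {set 'I_n}) j : j < #|S| -> exists2 y, y \in S & rk S y = j.
Proof.
move=> hj.
have u : uniq [seq rk S y | y <- enum S].
  rewrite map_inj_in_uniq ?enum_uniq // => a b; rewrite !mem_enum => aS bS.
  exact: rk_inj.
have sub : {subset [seq rk S y | y <- enum S] <= iota 0 #|S|}.
  move=> k /mapP [y]; rewrite mem_enum => yS ->.
  by rewrite mem_iota add0n /=; apply: rkf_bound.
have := uniq_min_size u sub; rewrite size_map size_iota -cardE leqnn.
case=> // _ /(_ j); rewrite mem_iota add0n hj /= => /mapP [y].
by rewrite mem_enum => yS ->; exists y.
Qed.

Lemma rkf_transfer m n (phi : 'I_m -> 'I_n) (sigma : 'I_m -> nat) (e : {set 'I_m}) x :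
  injective phi -> (forall u v, (phi u < phi v) = (sigma u < sigma v)) ->
  rk (phi @: e) (phi x) = rkf e sigma x.
Proof.
move=> phiI hm; rewrite /rk /rkf.
have -> : [set y in phi @: e | nat_of_ord y < phi x] = phi @: [set v in e | sigma v < sigma x].
  apply/setP => w; rewrite inE; apply/andP/imsetP.
    by case=> /imsetP [v ve ->]; rewrite hm => h; exists v; rewrite // inE ve.
  by case=> v; rewrite inE => /andP [ve h] ->; rewrite hm (mem_imset _ _ phiI).
by rewrite card_imset.
Qed.

Lemma rkf_U1 (A : finType) (S : {set A}) f y x : ~~ (f y < f x) ->
  rkf (y |: S) f x = rkf S f x.
Proof.
move=> h; rewrite /rkf; apply: eq_card => w; rewrite !inE.
by case: eqP => [->|]; rewrite ?(negbTE h) ?andbF.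
Qed.

Lemma perm_of_inj m n (phi : 'I_m -> 'I_n) : injective phi ->
  exists sigma : {perm 'I_m}, forall u v, (phi u < phi v) = (sigma u < sigma v).
Proof.
move=> phiI.
pose s x := rkf [set: 'I_m] (fun y => nat_of_ord (phi y)) x.
have sb : forall x, s x < m.
  by move=> x; rewrite -[X in _ < X](card_ord m) -cardsT; apply: rkf_bound; rewrite inE.
pose sf x := Ordinal (sb x).
have sm : forall u v, (s u < s v) = (phi u < phi v).
  by move=> u v; apply: rkf_lt; rewrite inE.
have sfI : injective sf.
  move=> u v /(congr1 val) /= e; apply: phiI; apply: val_inj => /=.
  case: (ltngtP (phi u) (phi v)) => // h.
    by move: h; rewrite -sm e ltnn.
  by move: h; rewrite -sm e ltnn.
by exists (perm sfI) => u v; rewrite !permE /= sm.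
Qed.

Lemma upper r m (E : {set {set 'I_m}}) : r_uniform r E -> ~ two_locally_large r E ->
  forall n, Cr r n E <= (2 * r).+1.
Proof.
move=> hE nLL n; rewrite /Cr; case: ex_minnP => k _ hmin; apply: hmin; apply/orP; left.
pose code (S : {set 'I_n}) (v : 'I_n) := if v \in S then rk S v else r + rk S v.
apply/existsP; exists [ffun v => [ffun S => (inord (code S v) : 'I_(2 * r).+1)]].
apply/forallP => phi; apply/implyP => /injectiveP phiI.
case: (perm_of_inj phiI) => sigma hs.
have [x hx] : exists x, forall i, 1 <= i <= 2 * r + 1 -> #|Tset r E sigma x i| <= 1.
  apply: NNPP => hn; apply: nLL; exists sigma => x.
  apply: NNPP => hn2; apply: hn; exists x => i hi.
  rewrite leqNgt; apply/negP => h2; apply: hn2; exists i; split => //.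
apply/existsP; exists x; apply/forallP => e; apply/implyP => eE.
apply/forallP => e'; apply/implyP => e'E; apply/implyP => /eqP hc.
rewrite !ffunE in hc.
pose a (e0 : {set 'I_m}) := rkf e0 (fun v => nat_of_ord (sigma v)) x.
have key : forall e0 : {set 'I_m}, code (phi @: e0) (phi x) = if x \in e0 then a e0 else r + a e0.
  by move=> e0; rewrite /code (mem_imset _ _ phiI) /a -(rkf_transfer _ _ phiI hs).
have bnd : forall e0 : {set 'I_m}, e0 \in E -> (x \in e0 -> a e0 < r) /\ a e0 <= r.
  move=> e0 e0E; split.
    by move=> xe; rewrite -(hE _ e0E); apply: rkf_bound.
  rewrite -(hE _ e0E); apply: subset_leq_card; apply/subsetP => y.
  by rewrite inE => /andP [].
have uniq1 : forall i, 1 <= i <= 2 * r + 1 -> e \in Tset r E sigma x i ->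
    e' \in Tset r E sigma x i -> e = e'.
  by move=> i hi h1 h2; move/card_le1_eqP: (hx i hi) => /(_ e e' h1 h2).
move: hc => /(congr1 (@nat_of_ord _)); rewrite !inordK; first last.
- rewrite key; move: (bnd e eE) (bnd e' e'E) => [h1 h2] [h1' h2']; case: ifP => [xe0|_]; try (have := h1 xe0); try (have := h1' xe0); lia.
- rewrite key; move: (bnd e eE) (bnd e' e'E) => [h1 h2] [h1' h2']; case: ifP => [xe0|_]; try (have := h1 xe0); try (have := h1' xe0); lia.
rewrite !key.
case: (bnd e eE) => b1 b2; case: (bnd e' e'E) => b1' b2'.
case xe: (x \in e); case xe': (x \in e') => hc.
- have := b1 xe; have := b1' xe' => l1 l2.
  suff -> : e = e' by [].
  apply: (uniq1 (a e).+1); first by lia.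
    rewrite /Tset; have -> : 1 <= (a e).+1 <= r by lia.
    by rewrite inE eE xe /= eqxx.
  rewrite /Tset; have -> : 1 <= (a e).+1 <= r by lia.
  by rewrite inE e'E xe' /= hc eqxx.
- have := b1 xe; lia.
- have := b1' xe'; lia.
- suff -> : e = e' by [].
  apply: (uniq1 (r + a e).+1); first by lia.
    rewrite /Tset; have -> : (1 <= (r + a e).+1 <= r) = false by lia.
    rewrite inE eE xe /=; have -> : (r + a e).+1 - r - 1 = a e by lia.
    by [].
  rewrite /Tset; have -> : (1 <= (r + a e).+1 <= r) = false by lia.
  rewrite inE e'E xe' /=; have -> : (r + a e).+1 - r - 1 = a e' by lia.
  by [].
Qed.

Lemma lower r m (E : {set {set 'I_m}}) : r_uniform r E -> two_locally_large r E ->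
  forall C, exists n, C < Cr r n E.
Proof.
move=> hE [sigma hLL] C.
pose K := {ffun 'I_r.+1 * 'I_r.+1 -> 'I_C.+1}.
case: (ramsey r.+1 #|K| m.+1) => N HR.
exists (N + C).+1.
rewrite ltnNge; apply/negP.
rewrite /Cr; case: ex_minnP => k /orP [hk|/eqP ->] _ hkC; last first.
  have := @ltn_expl 2 (N + C).+1 isT; lia.
case/existsP: hk => f hf.
have hk' : k <= C.+1 by apply: leqW.
pose n := (N + C).+1.
pose pk (S : {set 'I_n}) (j : nat) := [pick w in S | rk S w == j].
pose h (S : {set 'I_n}) : K := [ffun jl : 'I_r.+1 * 'I_r.+1 =>
  match pk S jl.1, pk S jl.2 with
  | Some z, Some w => widen_ord hk' (f z (S :\ w))
  | _, _ => ord0 end].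
pose g (S : {set 'I_n}) : nat := enum_rank (h S).
case: (HR 'I_n setT g) => [||Y _ [hY homY]].
- by rewrite cardsT card_ord; lia.
- by move=> A; rewrite /g ltn_ord.
have homh : forall A B : {set 'I_n}, A \subset Y -> B \subset Y ->
    #|A| = r.+1 -> #|B| = r.+1 -> h A = h B.
  move=> A B sA sB cA cB; apply: enum_rank_inj; apply: val_inj; exact: homY.
have hsig : forall x, sigma x < #|Y|.
  by move=> x; have := ltn_ord (sigma x); lia.
pose phi := [ffun x => odflt ord0 (pk Y (sigma x))].
have phiY : forall x, phi x \in Y /\ rk Y (phi x) = sigma x.
  move=> x; rewrite ffunE; case: (rk_surj (hsig x)) => y yY ry.
  by rewrite /pk (pick_rk yY ry) /=.
have [ys ysY rys] : exists2 ys, ys \in Y & rk Y ys = m.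
  by apply: rk_surj; lia.
have mono : forall u v, (phi u < phi v) = (sigma u < sigma v).
  move=> u v; case: (phiY u) => uY ru; case: (phiY v) => vY rv.
  by rewrite -(rk_lt _ uY) ru rv.
have phiI : injective phi.
  move=> u v e; apply: perm_inj; apply: val_inj.
  have e1 := (phiY u).2; have e2 := (phiY v).2; rewrite e in e1; rewrite e1 in e2; exact: e2.
have phis : forall x, phi x < ys.
  by move=> x; rewrite -(rk_lt _ (phiY x).1) rys (phiY x).2 ltn_ord.
have phieY : forall e0 : {set 'I_m}, phi @: e0 \subset Y.
  by move=> e0; apply/subsetP => w /imsetP [v _ ->]; exact: (phiY v).1.
have cphi : forall e0, e0 \in E -> #|phi @: e0| = r.
  by move=> e0 e0E; rewrite card_imset // hE.
have hxY : forall x (e0 : {set 'I_m}), e0 \in E ->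
    rk (phi @: e0) (phi x) = rkf e0 (fun v => nat_of_ord (sigma v)) x.
  by move=> x e0 _; apply: rkf_transfer.
have caseA : forall x (e0 : {set 'I_m}), e0 \in E -> x \in e0 ->
    [/\ ys |: phi @: e0 \subset Y, #|ys |: phi @: e0| = r.+1 &
     forall j : 'I_r.+1, rkf e0 (fun v => nat_of_ord (sigma v)) x = j ->
       h (ys |: phi @: e0) (j, ord_max) = widen_ord hk' (f (phi x) (phi @: e0))].
  move=> x e0 e0E xe0.
  have ysn : ys \notin phi @: e0.
    by apply/negP => /imsetP [v _ ev]; have := phis v; rewrite -ev ltnn.
  split.
  - by rewrite subUset sub1set ysY phieY.
  - by rewrite cardsU1 ysn cphi.
  move=> j hj; rewrite ffunE /=.
  have -> : pk (ys |: phi @: e0) j = Some (phi x).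
    apply: pick_rk; first by rewrite in_setU1 (mem_imset _ _ phiI) xe0 orbT.
    rewrite /rk rkf_U1; first by rewrite -/(rk _ _) hxY.
    by rewrite -leqNgt ltnW // phis.
  have -> : pk (ys |: phi @: e0) r = Some ys.
    apply: pick_rk; first by rewrite setU11.
    rewrite /rk rkf_U1 ?ltnn // -(cphi _ e0E) /rkf; apply: eq_card => w.
    rewrite !inE; case wI : (w \in phi @: e0) => //=.
    by case/imsetP: wI => v _ ->; rewrite phis.
  by rewrite setU1K.
have caseB : forall x (e0 : {set 'I_m}), e0 \in E -> x \notin e0 ->
    [/\ phi x |: phi @: e0 \subset Y, #|phi x |: phi @: e0| = r.+1 &
     forall j : 'I_r.+1, rkf e0 (fun v => nat_of_ord (sigma v)) x = j ->
       h (phi x |: phi @: e0) (j, j) = widen_ord hk' (f (phi x) (phi @: e0))].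
  move=> x e0 e0E xe0.
  have pxn : phi x \notin phi @: e0 by rewrite (mem_imset _ _ phiI).
  split.
  - by rewrite subUset sub1set (phiY x).1 phieY.
  - by rewrite cardsU1 pxn cphi.
  move=> j hj; rewrite ffunE /=.
  have -> : pk (phi x |: phi @: e0) j = Some (phi x).
    apply: pick_rk; first by rewrite setU11.
    by rewrite /rk rkf_U1 ?ltnn // -/(rk _ _) hxY.
  by rewrite setU1K.
have := forallP hf phi => /implyP /(_ (introT (injectiveP _) phiI)) /existsP [x hx].
case: (hLL x) => i [hi hT].
case/card_gt1P: hT => e [e' [he he' ne]].
have [eE e'E] : e \in E /\ e' \in E.
  by move: he he'; rewrite /Tset; case: ifP => _; rewrite !inE => /andP [-> _] /andP [-> _].
have claim : f (phi x) (phi @: e) = f (phi x) (phi @: e').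
  have wi : forall a b : 'I_k, widen_ord hk' a = widen_ord hk' b -> a = b.
    by move=> a b /(congr1 val) /= ab; apply: val_inj.
  apply: wi; move: he he'; rewrite /Tset; case: ifP => hir; rewrite !inE.
  - case/andP => _ /andP [xe /eqP ae]; case/andP => _ /andP [xe' /eqP ae'].
    have hj : rkf e (fun v => nat_of_ord (sigma v)) x < r.+1.
      apply: leq_trans (rkf_bound _ xe) _; rewrite (hE _ eE); exact: leqnSn.
    case: (caseA x e eE xe) => s1 c1 /(_ (Ordinal hj) erefl) <-.
    case: (caseA x e' e'E xe') => s2 c2 /(_ (Ordinal hj)) <-; last by rewrite /= /rkf /= ae ae'.
    by rewrite (homh _ _ s1 s2 c1 c2).
  - case/andP => _ /andP [xe /eqP ae]; case/andP => _ /andP [xe' /eqP ae'].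
    have hj : rkf e (fun v => nat_of_ord (sigma v)) x < r.+1.
      rewrite ltnS -(hE _ eE); apply: subset_leq_card; apply/subsetP => y.
      by rewrite inE => /andP [].
    case: (caseB x e eE xe) => s1 c1 /(_ (Ordinal hj) erefl) <-.
    case: (caseB x e' e'E xe') => s2 c2 /(_ (Ordinal hj)) <-; last by rewrite /= /rkf /= ae ae'.
    by rewrite (homh _ _ s1 s2 c1 c2).
move/forallP: hx => /(_ e) /implyP /(_ eE) /forallP /(_ e') /implyP /(_ e'E).
move=> /implyP /(_ (introT eqP claim)) /eqP /(imset_inj phiI) ee.
by rewrite ee eqxx in ne.
Qed.

Theorem theorem7 (r m : nat) (E : {set {set 'I_m}}) (hr : 2 <= r)
  (hE : r_uniform r E) :
  (exists C : nat, forall n : nat, Cr r n E <= C) <-> ~ two_locally_large r E.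
Proof.
split.
- move=> [C hC] hLL; case: (lower hE hLL C) => n; by rewrite ltnNge hC.
- move=> nLL; exists (2 * r).+1; exact: upper hE nLL.
Qed.
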